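(* Let $E\in\mathbb{S}^n_{++}$ and $0<\alpha<\sqrt n$. Then $K_E(\alpha)^*=K_{E^{-1}}\big(\sqrt{n-\alpha^2}\big)$.
   Context: $\mathbb{S}^n$ is the space of real symmetric $n\times n$ matrices with the trace inner product, $\mathbb{S}^n_{++}$ the positive definite matrices. For $F\in\mathbb{S}^n_{++}$ and $\gamma\ge0$, $K_F(\gamma)=\{X\in\mathbb{S}^n:\mathrm{tr}(F^{-1}X)\ge\gamma\,\mathrm{tr}((F^{-1}X)^2)^{1/2}\}$. $K_E(\alpha)^*=\{S:\mathrm{tr}(XS)\ge0\ \forall X\in K_E(\alpha)\}$ is the dual cone with respect to the trace inner product. *)

(* Defs.v *)
From HB Require Import structures.
From mathcomp Require Import all_boot all_order all_algebra.
Set Implicit Arguments. Unset Strict Implicit. Unset Printing Implicit Defensive.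
Import Order.TTheory GRing.Theory Num.Theory.
Local Open Scope ring_scope.

Definition symmx (R : rcfType) (n : nat) (A : 'M[R]_n) : Prop := A^T = A.

Definition posdefmx (R : rcfType) (n : nat) (A : 'M[R]_n) : Prop :=
  symmx A /\ forall x : 'cV[R]_n, x != 0 -> 0 < (x^T *m A *m x) 0 0.

Definition Kcone (R : rcfType) (n : nat) (F : 'M[R]_n) (gamma : R)
    (X : 'M[R]_n) : Prop :=
  symmx X /\
  gamma * Num.sqrt (\tr ((invmx F *m X) *m (invmx F *m X))) <= \tr (invmx F *m X).

Definition dual_cone (R : rcfType) (n : nat) (K : 'M[R]_n -> Prop)
    (S : 'M[R]_n) : Prop :=
  symmx S /\ forall X : 'M[R]_n, K X -> 0 <= \tr (X *m S).

(* Main.v *)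
Require Import Defs.
From HB Require Import structures.
From mathcomp Require Import all_boot all_order all_algebra.
From mathcomp Require Import ring lra.
Import Order.TTheory GRing.Theory Num.Theory.
Local Open Scope ring_scope.
Set Implicit Arguments. Unset Strict Implicit.

Definition bf (R : rcfType) n (P : 'M[R]_n) (x y : 'cV[R]_n) : R := (x^T *m P *m y) 0 0.
Definition psd (R : rcfType) n (P : 'M[R]_n) : Prop := forall x, 0 <= bf P x x.

Lemma bfDl (R : rcfType) n (P : 'M[R]_n) x y z : bf P (x + y) z = bf P x z + bf P y z.
Proof. by rewrite /bf linearD /= !mulmxDl mxE. Qed.
Lemma bfDr (R : rcfType) n (P : 'M[R]_n) x y z : bf P z (x + y) = bf P z x + bf P z y.
Proof. by rewrite /bf !mulmxDr mxE. Qed.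
Lemma bfZl (R : rcfType) n (P : 'M[R]_n) a x z : bf P (a *: x) z = a * bf P x z.
Proof. by rewrite /bf linearZ /= -!scalemxAl mxE. Qed.
Lemma bfZr (R : rcfType) n (P : 'M[R]_n) a x z : bf P z (a *: x) = a * bf P z x.
Proof. by rewrite /bf -!scalemxAr mxE. Qed.
Lemma bfC (R : rcfType) n (P : 'M[R]_n) x y : P^T = P -> bf P x y = bf P y x.
Proof.
move=> hP; rewrite /bf; have -> : (x^T *m P *m y) 0 0 = (x^T *m P *m y)^T 0 0 by rewrite [RHS]mxE.
by rewrite !trmx_mul hP trmxK mulmxA.
Qed.
Lemma bf_delta (R : rcfType) n (P : 'M[R]_n) i j :
  bf P (delta_mx i 0) (delta_mx j 0) = P i j.
Proof. by rewrite /bf trmx_delta -rowE -colE !mxE. Qed.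

Lemma psd_zero_row (R : rcfType) n (P : 'M[R]_n) i j :
  P^T = P -> psd P -> P i i = 0 -> P i j = 0.
Proof.
move=> hS hP hii.
have H : forall t : R, 0 <= 2 * t * P i j + P j j.
  move=> t; have := hP (t *: delta_mx i 0 + delta_mx j 0).
  rewrite !bfDl !bfDr !bfZl !bfZr !bf_delta hii.
  have -> : P j i = P i j by rewrite -{1}hS mxE.
  move=> h; nra.
apply/eqP; apply/negPn/negP => hne.
have := H (- (P j j + 1) / (2 * P i j)).
have -> : 2 * (- (P j j + 1) / (2 * P i j)) * P i j = - (P j j + 1).
  by field.
move=> h; clear hS hP H; lra.
Qed.

Lemma bfB (R : rcfType) n (P Q : 'M[R]_n) c x y :
  bf (P - c *: Q) x y = bf P x y - c * bf Q x y.
Proof. by rewrite /bf mulmxBr mulmxBl -scalemxAr -scalemxAl !mxE. Qed.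

Lemma bf_outer (R : rcfType) n (P : 'M[R]_n) i x y : P^T = P ->
  bf (col i P *m (col i P)^T) x y = bf P x (delta_mx i 0) * bf P (delta_mx i 0) y.
Proof.
move=> hS; rewrite /bf colE trmx_mul hS.
set d : 'cV[R]_n := delta_mx i 0.
have -> : x^T *m (P *m d *m (d^T *m P)) *m y
   = (x^T *m P *m d) *m (d^T *m P *m y) by rewrite !mulmxA.
by rewrite [LHS]mxE big_ord1.
Qed.

Lemma peel_entry (R : rcfType) n (P : 'M[R]_n) c i k l :
  (P - c *: (col i P *m (col i P)^T)) k l = P k l - c * (P k i * P l i).
Proof. by rewrite !mxE big_ord1 !mxE. Qed.

Lemma peel_sym (R : rcfType) n (P : 'M[R]_n) c i : P^T = P ->
  (P - c *: (col i P *m (col i P)^T))^T = P - c *: (col i P *m (col i P)^T).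
Proof. by move=> hS; rewrite linearB linearZ /= trmx_mul trmxK hS. Qed.

Lemma peel_psd (R : rcfType) n (P : 'M[R]_n) i : P^T = P -> psd P -> 0 < P i i ->
  psd (P - (P i i)^-1 *: (col i P *m (col i P)^T)).
Proof.
move=> hS hP ha x; rewrite bfB bf_outer //.
set e : 'cV[R]_n := delta_mx i 0.
set a := P i i.
have hb : bf P x e = bf P e x by rewrite (bfC _ _ hS).
set b := bf P e x.
have := hP (x + (- b / a) *: e).
rewrite !bfDl !bfDr !bfZl !bfZr hb bf_delta -/a.
have -> : bf P x x + - b / a * b + (- b / a * b + - b / a * (- b / a * a)) = bf P x x - a^-1 * (b * b).
  by field; rewrite gt_eqF.
done.
Qed.

Lemma psd_diag0 (R : rcfType) n (P : 'M[R]_n) : P^T = P -> psd P ->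
  (forall i, P i i = 0) -> P = 0.
Proof.
move=> hS hP h0; apply/matrixP => i j; rewrite mxE.
exact: psd_zero_row.
Qed.

Lemma psd_decomp (R : rcfType) n (P : 'M[R]_n) : P^T = P -> psd P ->
  exists s : seq (R * 'cV[R]_n), all (fun c => 0 <= c.1) s /\
    P = \sum_(c <- s) c.1 *: (c.2 *m c.2^T).
Proof.
move: {2}#|[pred i | P i i != 0]| (leqnn #|[pred i | P i i != 0]|) => k.
have nocase : forall P : 'M[R]_n, P^T = P -> psd P -> [pred i | P i i != 0] =1 xpred0 ->
    exists s : seq (R * 'cV[R]_n), all (fun c => 0 <= c.1) s /\
    P = \sum_(c <- s) c.1 *: (c.2 *m c.2^T).
  move=> Q hS hP hn; exists [::]; split => //; rewrite big_nil; apply: psd_diag0 => // i.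
  by apply/eqP; move: (hn i) => /= /negbFE.
elim: k P => [|k IH] P hk hS hP.
  case: (pickP [pred i | P i i != 0]) => [i hi | hn]; last exact: nocase.
  have : (0 < #|[pred i | P i i != 0%R]|)%N by apply/card_gt0P; exists i.
  by rewrite lt0n -leqn0 hk.
case: (pickP [pred i | P i i != 0]) => [i hi | hn]; last exact: nocase.
have {}hi : P i i != 0 := hi.
have ha : 0 < P i i by rewrite lt_def hi; have := hP (delta_mx i 0); rewrite bf_delta.
set c := (P i i)^-1.
set P' := P - c *: (col i P *m (col i P)^T).
have [s [hs1 hs2]] : exists s : seq (R * 'cV[R]_n), all (fun c => 0 <= c.1) s /\
    P' = \sum_(c <- s) c.1 *: (c.2 *m c.2^T).
  apply: IH; last 2 first.
  - exact: peel_sym.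
  - exact: peel_psd.
  rewrite -ltnS; apply: leq_trans hk; apply: proper_card; apply/properP; split.
    apply/subsetP => j; rewrite !inE /P' peel_entry; apply: contraNN => /eqP hj.
    by rewrite hj (@psd_zero_row _ _ P j i hS hP hj) !(mulr0, mul0r) subr0.
  exists i; rewrite !inE //= /P' peel_entry /c mulrA mulVf ?mul1r ?subrr ?eqxx //.
exists ((c, col i P) :: s); split; first by rewrite /= hs1 andbT /c invr_ge0 ltW.
by rewrite big_cons /= -hs2 /P' addrC subrK.
Qed.

Lemma tr_psd (R : rcfType) n (P X : 'M[R]_n) : P^T = P -> psd P -> X^T = X ->
  0 <= \tr (P *m X *m P *m X).
Proof.
move=> hS hP hX; have [s [hs1 hs2]] := psd_decomp hS hP.
rewrite {1}hs2 !mulmx_suml linear_sum /= big_seq; apply: sumr_ge0 => c hc.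
have hc1 := allP hs1 c hc.
rewrite -!scalemxAl mxtraceZ; apply: mulr_ge0 => //.
have -> : c.2 *m (c.2)^T *m X *m P *m X = c.2 *m ((X *m c.2)^T *m P *m X)
  by rewrite trmx_mul hX !mulmxA.
rewrite mxtrace_mulC trace_mx11.
by have := hP (X *m c.2); rewrite /bf !mulmxA.
Qed.
Lemma cs_real (R : rcfType) (Qx Qy C : R) : 0 <= Qy ->
  (forall t, 0 <= Qx - 2 * t * C + t ^+ 2 * Qy) -> C ^+ 2 <= Qx * Qy.
Proof.
move=> hy; case: (ltrgtP Qy 0) hy => // [hpos _ h | -> _ h].
  have := h (C / Qy).
  have -> : Qx - 2 * (C / Qy) * C + (C / Qy) ^+ 2 * Qy = (Qx * Qy - C ^+ 2) / Qy.
    by field; rewrite gt_eqF.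
  by rewrite pmulr_lge0 ?invr_gt0 // subr_ge0.
case: (eqVneq C 0) => [-> | hC]; first by rewrite expr0n /= mulr0.
have := h ((Qx + 1) / (2 * C)).
have -> : Qx - 2 * ((Qx + 1) / (2 * C)) * C + ((Qx + 1) / (2 * C)) ^+ 2 * 0 = -1.
  by field.
by rewrite lerNr oppr0 ler10.
Qed.

Lemma sqrt_le_of (R : rcfType) (al q t : R) : 0 <= al -> 0 <= q -> 0 <= t ->
  al ^+ 2 * q <= t ^+ 2 -> al * Num.sqrt q <= t.
Proof.
move=> ha hq ht h; have hs := sqrtr_ge0 q; have hs2 := sqr_sqrtr hq.
rewrite leNgt; apply/negP => hlt.
have : t ^+ 2 < (al * Num.sqrt q) ^+ 2 by nra.
rewrite exprMn hs2; lra.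
Qed.

Lemma le_of_sqrt (R : rcfType) (al q t : R) : 0 <= al -> 0 <= q ->
  al * Num.sqrt q <= t -> 0 <= t /\ al ^+ 2 * q <= t ^+ 2.
Proof.
move=> ha hq h; have hs := sqrtr_ge0 q; have hs2 := sqr_sqrtr hq.
have h0 : 0 <= al * Num.sqrt q by apply: mulr_ge0.
split; first by apply: le_trans h.
rewrite -hs2 -exprMn; rewrite ler_pXn2r ?inE //; exact: le_trans h.
Qed.

Lemma core1 (R : rcfType) (n al be Q W a b C : R) : 0 < n -> 0 < al -> 0 < be ->
  al ^+ 2 + be ^+ 2 = n -> 0 <= a -> 0 <= b ->
  al ^+ 2 * Q <= (n * a) ^+ 2 -> be ^+ 2 * W <= (n * b) ^+ 2 ->
  0 <= Q - n * a ^+ 2 -> 0 <= W - n * b ^+ 2 ->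
  (C - n * a * b) ^+ 2 <= (Q - n * a ^+ 2) * (W - n * b ^+ 2) -> 0 <= C.
Proof.
move=> hn ha hb hab ha0 hb0 hQ hW hQ' hW' hcs.
set Q' := Q - n * a ^+ 2 in hQ' hcs; set W' := W - n * b ^+ 2 in hW' hcs.
have h1 : al ^+ 2 * Q' <= n * a ^+ 2 * be ^+ 2.
  rewrite /Q'; have : n * a ^+ 2 * be ^+ 2 = (n * a) ^+ 2 - al ^+ 2 * (n * a ^+ 2).
    by rewrite -hab; ring.
  move=> ->; nra.
have h2 : be ^+ 2 * W' <= n * b ^+ 2 * al ^+ 2.
  rewrite /W'; have : n * b ^+ 2 * al ^+ 2 = (n * b) ^+ 2 - be ^+ 2 * (n * b ^+ 2).
    by rewrite -hab; ring.
  move=> ->; nra.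
have h3 : (al ^+ 2 * Q') * (be ^+ 2 * W') <= (n * a ^+ 2 * be ^+ 2) * (n * b ^+ 2 * al ^+ 2).
  apply: ler_pM => //; apply: mulr_ge0 => //; apply: sqr_ge0.
have hab2 : 0 < al ^+ 2 * be ^+ 2 by apply: mulr_gt0; apply: exprn_gt0.
have h4 : Q' * W' <= (n * a * b) ^+ 2.
  have : (al ^+ 2 * be ^+ 2) * (Q' * W') <= (al ^+ 2 * be ^+ 2) * (n * a * b) ^+ 2.
    have -> : (al ^+ 2 * be ^+ 2) * (Q' * W') = (al ^+ 2 * Q') * (be ^+ 2 * W') by ring.
    have -> : (al ^+ 2 * be ^+ 2) * (n * a * b) ^+ 2 = (n * a ^+ 2 * be ^+ 2) * (n * b ^+ 2 * al ^+ 2) by ring.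
    exact: h3.
  by rewrite ler_pM2l.
have hnab : 0 <= n * a * b by rewrite mulr_ge0 // mulr_ge0 // ltW.
nra.
Qed.

Lemma core2 (R : rcfType) (n al be W b c : R) : 0 < n -> 0 < al -> 0 < be ->
  al ^+ 2 + be ^+ 2 = n -> 0 <= b -> 0 <= W - n * b ^+ 2 -> 0 <= c ->
  c ^+ 2 * (n * be ^+ 2) = al ^+ 2 * (W - n * b ^+ 2) ->
  W - n * b ^+ 2 <= c * (n * b) -> be ^+ 2 * W <= (n * b) ^+ 2.
Proof.
move=> hn ha hb hab hb0 hw hc hc2 hle.
set w := W - n * b ^+ 2 in hw hc2 hle.
have hW : W = w + n * b ^+ 2 by rewrite /w; ring.
rewrite hW.
have key : be ^+ 2 * w <= al ^+ 2 * n * b ^+ 2.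
  case: (ltrgtP w 0) hw => // [hwp _ | -> _]; last first.
    by rewrite mulr0 mulr_ge0 // ?mulr_ge0 ?sqr_ge0 // ltW.
  have h1 : w ^+ 2 <= (c * (n * b)) ^+ 2.
    have : 0 <= w by exact: ltW.
    nra.
  have h3 : (n * w) * (be ^+ 2 * w) <= (n * w) * (al ^+ 2 * n * b ^+ 2).
    have -> : (n * w) * (be ^+ 2 * w) = w ^+ 2 * (n * be ^+ 2) by ring.
    have -> : (n * w) * (al ^+ 2 * n * b ^+ 2) = (c * (n * b)) ^+ 2 * (n * be ^+ 2).
      rewrite [RHS](_ : _ = c ^+ 2 * (n * be ^+ 2) * (n * b) ^+ 2); last by ring.
      by rewrite hc2; ring.
    by apply: ler_wpM2r => //; apply: mulr_ge0; [exact: ltW | exact: sqr_ge0].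
  by rewrite ler_pM2l ?mulr_gt0 // in h3.
have e : (n * b) ^+ 2 = (al ^+ 2 + be ^+ 2) * n * b ^+ 2 by rewrite hab; ring.
rewrite e; nra.
Qed.

Definition ip (R : rcfType) n (P X Y : 'M[R]_n) : R := \tr (P *m X *m P *m Y).

Lemma ipC (R : rcfType) n (P X Y : 'M[R]_n) : ip P X Y = ip P Y X.
Proof.
rewrite /ip; have -> : P *m X *m P *m Y = (P *m X) *m (P *m Y) by rewrite !mulmxA.
by rewrite mxtrace_mulC !mulmxA.
Qed.
Lemma ipBr (R : rcfType) n (P X Y Z : 'M[R]_n) : ip P X (Y - Z) = ip P X Y - ip P X Z.
Proof. by rewrite /ip mulmxBr linearB. Qed.
Lemma ipZr (R : rcfType) n (P X Y : 'M[R]_n) a : ip P X (a *: Y) = a * ip P X Y.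
Proof. by rewrite /ip -scalemxAr mxtraceZ. Qed.
Lemma ipBl (R : rcfType) n (P X Y Z : 'M[R]_n) : ip P (Y - Z) X = ip P Y X - ip P Z X.
Proof. by rewrite ipC ipBr !(ipC P X). Qed.
Lemma ipZl (R : rcfType) n (P X Y : 'M[R]_n) a : ip P (a *: Y) X = a * ip P Y X.
Proof. by rewrite ipC ipZr (ipC P X). Qed.

Lemma posdef_unit (R : rcfType) n (E : 'M[R]_n) : posdefmx E -> E \in unitmx.
Proof.
move=> [hS hpd]; rewrite -row_free_unit -kermx_eq0; apply/rowV0P => v /sub_kermxP hv.
apply/eqP; apply/negPn/negP => hv0.
have := hpd v^T; rewrite trmx_eq0 => /(_ hv0).
by rewrite trmxK hv mul0mx mxE ltxx.
Qed.

Lemma inv_psd (R : rcfType) n (E : 'M[R]_n) : posdefmx E -> psd (invmx E).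
Proof.
move=> hE x; have hU := posdef_unit hE; case: hE => hS hpd.
set y := invmx E *m x.
have -> : bf (invmx E) x x = (y^T *m E *m y) 0 0.
  rewrite /y /bf trmx_mul trmx_inv hS -!mulmxA (mulmxA E) mulmxV // mul1mx.
  by rewrite !mulmxA.
case: (eqVneq y 0) => [-> | hy]; first by rewrite mulmx0 mxE.
exact: ltW (hpd y hy).
Qed.

Lemma symB (R : rcfType) n (X Y : 'M[R]_n) a : X^T = X -> Y^T = Y -> (X - a *: Y)^T = X - a *: Y.
Proof. by move=> hX hY; rewrite linearB linearZ /= hX hY. Qed.

Lemma ip_cs (R : rcfType) n (P X Y : 'M[R]_n) : P^T = P -> psd P -> X^T = X -> Y^T = Y ->
  ip P X Y ^+ 2 <= ip P X X * ip P Y Y.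
Proof.
move=> hS hP hX hY; apply: cs_real; first exact: tr_psd.
move=> t; have := tr_psd hS hP (symB t hX hY); rewrite -/(ip _ _ _).
rewrite ipBl !ipBr !ipZl !ipZr (ipC P Y X).
have -> : ip P X X - t * ip P X Y - (t * ip P X Y - t * (t * ip P Y Y)) =
  ip P X X - 2 * t * ip P X Y + t ^+ 2 * ip P Y Y by ring.
done.
Qed.

Lemma ip_exp (R : rcfType) n (P X Y E : 'M[R]_n) a b :
  ip P (X - a *: E) (Y - b *: E) =
  ip P X Y - b * ip P X E - a * ip P Y E + a * b * ip P E E.
Proof. rewrite ipBl !ipBr !ipZl !ipZr (ipC P E Y); ring. Qed.

Unset Implicit Arguments.

Theorem lemma3p1 (R : rcfType) (n : nat) (E : 'M[R]_n) (alpha : R) :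
  posdefmx E -> 0 < alpha -> alpha < Num.sqrt (n%:R) ->
  forall S : 'M[R]_n,
    dual_cone (Kcone E alpha) S <->
    Kcone (invmx E) (Num.sqrt (n%:R - alpha ^+ 2)) S.
Proof.
move=> hE ha hal S.
have hU := posdef_unit hE.
have hES : E^T = E by case: hE.
set P := invmx E.
have hPS : P^T = P by rewrite /P trmx_inv hES.
have hPp : psd P := inv_psd hE.
have hPE : P *m E = 1%:M := mulVmx hU.
have hEP : E *m P = 1%:M := mulmxV hU.
have hn : ip P E E = n%:R by rewrite /ip hPE mul1mx hPE mxtrace1.
have hsn : 0 < Num.sqrt (n%:R : R) by apply: lt_trans hal.
have hn0 : 0 < (n%:R : R) by rewrite -sqrtr_gt0.
have hal2 : alpha ^+ 2 < n%:R.
  have := sqr_sqrtr (ltW hn0); have := sqrtr_ge0 (n%:R : R); nra.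
set be := Num.sqrt (n%:R - alpha ^+ 2).
have hbe : 0 < be by rewrite /be sqrtr_gt0 subr_gt0.
have hab : alpha ^+ 2 + be ^+ 2 = n%:R.
  by rewrite /be sqr_sqrtr ?subr_ge0 ?(ltW hal2) // addrC subrK.
set Z := E *m S *m E.
have eqXX : forall X, \tr (P *m X *m (P *m X)) = ip P X X by move=> X; rewrite /ip !mulmxA.
have eqXE : forall X, \tr (P *m X) = ip P X E by move=> X; rewrite /ip -mulmxA hPE mulmx1.
have eqZZ : \tr (E *m S *m (E *m S)) = ip P Z Z.
  rewrite /ip /Z !mulmxA hPE mul1mx -(mulmxA _ E P) hEP mulmx1.
  by rewrite -!mulmxA mxtrace_mulC !mulmxA.
have eqZE : \tr (E *m S) = ip P Z E.
  rewrite /ip /Z !mulmxA hPE mul1mx -(mulmxA _ E P) hEP mulmx1.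
  by rewrite mxtrace_mulC.
have eqXZ : forall X, \tr (X *m S) = ip P X Z.
  move=> X; rewrite /ip /Z !mulmxA -(mulmxA _ P E) hPE mulmx1.
  by rewrite [RHS]mxtrace_mulC !mulmxA hEP mul1mx.
have hZs : S^T = S -> Z^T = Z by move=> hSs; rewrite /Z !trmx_mul hES hSs mulmxA.
have hiPE : invmx P = E by rewrite /P invmxK.
rewrite /dual_cone /Kcone hiPE eqZZ eqZE.
split.
  move=> [hSs hdual]; split => //.
  have hW := tr_psd hPS hPp (hZs hSs); rewrite -/(ip _ _ _) in hW.
  have hB : 0 <= ip P Z E.
    rewrite -eqZE; apply: hdual; split => //.
    rewrite eqXX eqXE hn; apply: sqrt_le_of => //; try exact: ltW.
    nra.
  set B := ip P Z E in hB *.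
  set W := ip P Z Z in hW *.
  set b := B / n%:R.
  have hBn : B = n%:R * b by rewrite /b mulrC mulfVK ?gt_eqF.
  have hb : 0 <= b by rewrite /b divr_ge0 // ltW.
  set zp := Z - b *: E.
  have hzs : zp^T = zp by apply: symB => //; exact: hZs.
  have hw : ip P zp zp = W - n%:R * b ^+ 2.
    rewrite /zp ip_exp -/W -/B hn hBn; ring.
  have hw0 : 0 <= W - n%:R * b ^+ 2 by rewrite -hw; exact: tr_psd.
  have hzE : ip P zp E = 0.
    by rewrite /zp ipBl ipZl hn -/B hBn mulrC subrr.
  have hzZ : ip P zp Z = W - n%:R * b ^+ 2.
    rewrite /zp ipBl ipZl (ipC P E Z) -/B -/W hBn; ring.
  clearbody zp.
  set c := Num.sqrt (alpha ^+ 2 * (W - n%:R * b ^+ 2) / (n%:R * be ^+ 2)).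
  have hc : 0 <= c := sqrtr_ge0 _.
  have hc2 : c ^+ 2 * (n%:R * be ^+ 2) = alpha ^+ 2 * (W - n%:R * b ^+ 2).
    rewrite /c sqr_sqrtr; last first.
      by apply: divr_ge0; [apply: mulr_ge0 => //; exact: sqr_ge0 |
        apply: mulr_ge0; [exact: ltW | exact: sqr_ge0]].
    by rewrite mulfVK // mulf_neq0 ?gt_eqF ?exprn_gt0.
  set X := c *: E - zp.
  have hXs : X^T = X.
    by rewrite /X linearB linearZ /= hES hzs.
  have hXX : ip P X X = c ^+ 2 * n%:R + (W - n%:R * b ^+ 2).
    rewrite /X ipBl !ipBr !ipZl !ipZr (ipC P E zp) hzE hw hn; ring.
  have hXE : ip P X E = c * n%:R.
    by rewrite /X ipBl ipZl hzE hn subr0.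
  have hXK : 0 <= ip P X Z.
    rewrite -eqXZ; apply: hdual; split => //.
    rewrite eqXX eqXE hXX hXE; apply: sqrt_le_of; try exact: ltW.
    - apply: addr_ge0 => //; apply: mulr_ge0; [exact: sqr_ge0 | exact: ltW].
    - by apply: mulr_ge0 => //; exact: ltW.
    have e : (c * n%:R) ^+ 2 = c ^+ 2 * n%:R * (alpha ^+ 2 + be ^+ 2) by rewrite hab; ring.
    rewrite e; nra.
  have hXZ : ip P X Z = c * B - (W - n%:R * b ^+ 2).
    by rewrite /X ipBl ipZl (ipC P E Z) -/B hzZ.
  rewrite hXZ hBn subr_ge0 in hXK.
  have := core2 hn0 ha hbe hab hb hw0 hc hc2 hXK.
  rewrite -hBn => hfin.
  apply: sqrt_le_of => //; exact: ltW.
move=> [hSs hK]; split => // X [hXs hXc].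
rewrite eqXX eqXE in hXc; rewrite eqXZ.
have hQ := tr_psd hPS hPp hXs; rewrite -/(ip _ _ _) in hQ.
have hW := tr_psd hPS hPp (hZs hSs); rewrite -/(ip _ _ _) in hW.
have [hA hA2] := le_of_sqrt (ltW ha) hQ hXc.
have [hB hB2] := le_of_sqrt (ltW hbe) hW hK.
set A := ip P X E in hA hA2 hXc *.
set B := ip P Z E in hB hB2 hK *.
set a := A / n%:R.
set b := B / n%:R.
have hAn : A = n%:R * a by rewrite /a mulrC mulfVK ?gt_eqF.
have hBn : B = n%:R * b by rewrite /b mulrC mulfVK ?gt_eqF.
have ha0 : 0 <= a by rewrite /a divr_ge0 // ltW.
have hb0 : 0 <= b by rewrite /b divr_ge0 // ltW.
have hxs : (X - a *: E)^T = X - a *: E by apply: symB.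
have hzs : (Z - b *: E)^T = Z - b *: E by apply: symB => //; exact: hZs.
have hQ' := tr_psd hPS hPp hxs; rewrite -/(ip _ _ _) ip_exp -/A hn hAn in hQ'.
have hW' := tr_psd hPS hPp hzs; rewrite -/(ip _ _ _) ip_exp -/B hn hBn in hW'.
have hcs := ip_cs hPS hPp hxs hzs; rewrite !ip_exp -/A -/B hn hAn hBn in hcs.
rewrite hAn in hA2; rewrite hBn in hB2.
apply: (core1 hn0 ha hbe hab ha0 hb0 hA2 hB2).
- by move: hQ'; congr (_ <= _); ring.
- by move: hW'; congr (_ <= _); ring.
- by move: hcs; congr (_ <= _); ring.
Qed.
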